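(* Let $\mathcal{SB}=\langle\mathcal{L},A,\to,\text{supp}\rangle$ be a strongly saturated SBAF. Then every confident weakly coherent argument extension $E\subseteq A$ is a preferred extension of $\langle A,\to\rangle$.
   Context: A language is a triple $\mathcal{L}=\langle L,\overline{\cdot},n\rangle$: $L$ is a nonempty set of sentences; $\overline{\cdot}$ assigns to each $s\in L$ a set $\overline{s}\subseteq L$ of sentences incompatible with $s$, and is symmetric; $n$ is a partial naming function assigning to an argument $a$ a sentence $n(a)\in L$ (if undefined, put $\overline{n(a)}:=\emptyset$), with $\overline{n(\langle\{t\},t\rangle)}=\emptyset$. An argument is a pair $a=\langle Prem(a),Conc(a)\rangle$ with $Prem(a)$ a nonempty finite subset of $L$ and $Conc(a)\in L$; $Sent(a):=Prem(a)\cup\{Conc(a)\}$, $Sent(E):=\bigcup_{a\in E}Sent(a)$. The minimal argument for $s$ is $\langle\{s\},s\rangle$. A set $E$ supports $a$ if $Prem(a)\subseteq Sent(E)$; $E$ contains undercutting information for $a$ if $\overline{n(a)}\cap Sent(E)\neq\emptyset$. Argument $a$ attacks $b$ ($a\to b$) if $Conc(a)\in\overline{s}$ for some $s\in Sent(b)$ or $Conc(a)\in\overline{n(b)}$. An SBAF is $\langle\mathcal{L},A,\to,\text{supp}\rangle$ with $A$ a finite set of arguments. For $E\subseteq A$: $E$ defends $a\in A$ if for every $b\in A$ with $b\to a$ some element of $E$ attacks $b$; $E$ is conflict-free if no $a,b\in E$ with $a\to b$; admissible if conflict-free and defends all its elements; preferred if $\subseteq$-maximal among admissible sets. $E$ is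 weakly coherent if it is admissible and every $a\in A$ supported by $E$, for which $E$ contains no undercutting information and which $E$ defends, belongs to $E$. $S$ is compatible if no $s,t\in S$ with $s\in\overline t$. $Arg_s(S):=\{a\in A\mid Prem(a)\subseteq S\text{ and }\overline{n(a)}\cap S=\emptyset\}$; $R^S(E):=\{a\in A\mid a\in Arg_s(S)\text{ and }E\text{ defends }a\}$. For compatible $S$, $Init(S)$ is the largest admissible subset of $\{a\in A\mid Sent(a)\subseteq S\text{ and }\overline{n(a)}\cap S=\emptyset\}$, and $Arg_w(S)$ is the $\subseteq$-least set $E$ with $Init(S)\subseteq E$ and $R^S(E)=E$. A weakly adequate language extension is a compatible $S\subseteq Sent(A)$ with $Sent(a)\subseteq S$ for all $a\in Arg_w(S)$; it is confident if it is $\subseteq$-maximal among weakly adequate language extensions. An argument extension $E$ is confident weakly coherent if it is weakly coherent and $E=Arg_w(S)$ for some confident weakly adequate language extension $S$. The SBAF is strongly saturated if (i) for every $s\in Sent(A)$ for which some $t\in Sent(A)\cap\overline{s}$ exists, $A$ contains both the minimal argument for $s$ and the minimal argument for $t$, and (ii) for every $u\in Sent(A)$ with $u\in\overline{n(a)}$ for some $a\in A$, $A$ contains the minimal argument for $u$. *)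

(* Defs.v *)
From mathcomp Require Import all_boot.
From mathcomp Require Import finmap.
Set Implicit Arguments. Unset Strict Implicit. Unset Printing Implicit Defensive.
Local Open Scope fset_scope.

Definition Arg (S : choiceType) : Type := ({fset S} * S)%type.
Definition Prem {S : choiceType} (a : Arg S) : {fset S} := a.1.
Definition Conc {S : choiceType} (a : Arg S) : S := a.2.
Definition minarg {S : choiceType} (s : S) : Arg S := ([fset s], s).
Definition Sent {S : choiceType} (a : Arg S) (x : S) : Prop :=
  x \in Prem a \/ x = Conc a.

Section SBAF.
Variable S : choiceType.
(* inc s t  <->  t ∈ overline(s) *)
Variable inc : S -> S -> Prop.
Variable n : Arg S -> option S.
Variable A : {fset Arg S}.

Definition argset := Arg S -> Prop.
Definition sentset := S -> Prop.
Definition subA (E : argset) : Prop := forall a, E a -> a \in A.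
Definition incl {T : Type} (X Y : T -> Prop) : Prop := forall x, X x -> Y x.

(* t ∈ overline(n(a)), with overline(n(a)) = ∅ when n(a) is undefined *)
Definition incn (a : Arg S) (t : S) : Prop :=
  match n a with Some s => inc s t | None => False end.

Definition SentE (E : argset) (x : S) : Prop := exists a, E a /\ Sent a x.
Definition SentA (x : S) : Prop := exists a, a \in A /\ Sent a x.

Definition attacks (a b : Arg S) : Prop :=
  (exists s, Sent b s /\ inc s (Conc a)) \/ incn b (Conc a).

Definition defends (E : argset) (a : Arg S) : Prop :=
  forall b, b \in A -> attacks b a -> exists c, E c /\ attacks c b.
Definition conflict_free (E : argset) : Prop :=
  forall a b, E a -> E b -> ~ attacks a b.
Definition admissible (E : argset) : Prop :=
  conflict_free E /\ (forall a, E a -> defends E a).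
Definition preferred (E : argset) : Prop :=
  subA E /\ admissible E /\
  (forall F, subA F -> admissible F -> incl E F -> incl F E).

Definition supports (E : argset) (a : Arg S) : Prop :=
  forall s, s \in Prem a -> SentE E s.
Definition undercut_info (E : argset) (a : Arg S) : Prop :=
  exists t, incn a t /\ SentE E t.

Definition weakly_coherent (E : argset) : Prop :=
  admissible E /\
  (forall a, a \in A -> supports E a -> ~ undercut_info E a -> defends E a -> E a).

Definition compatible (X : sentset) : Prop :=
  forall s t, X s -> X t -> ~ inc t s.

Definition Arg_s (X : sentset) (a : Arg S) : Prop :=
  a \in A /\ (forall s, s \in Prem a -> X s) /\ (forall t, incn a t -> ~ X t).
Definition RS (X : sentset) (E : argset) (a : Arg S) : Prop :=
  Arg_s X a /\ defends E a.

Definition Init_cand (X : sentset) (a : Arg S) : Prop :=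
  a \in A /\ (forall s, Sent a s -> X s) /\ (forall t, incn a t -> ~ X t).
(* Init(X): the largest admissible subset of Init_cand X, written as the union
   of all admissible subsets of it (it is the largest one, since for compatible
   X the candidate set is conflict-free). *)
Definition Init (X : sentset) (a : Arg S) : Prop :=
  exists J, incl J (Init_cand X) /\ admissible J /\ J a.
(* Arg_w(X): the ⊆-least E with Init X ⊆ E and R^X(E) = E, written as the
   intersection of all such E (it is itself one, by Knaster–Tarski). *)
Definition Arg_w (X : sentset) (a : Arg S) : Prop :=
  forall F : argset, incl (Init X) F -> (forall b, RS X F b <-> F b) -> F a.

Definition weakly_adequate (X : sentset) : Prop :=
  incl X SentA /\ compatible X /\
  (forall a, Arg_w X a -> forall s, Sent a s -> X s).
Definition confident (X : sentset) : Prop :=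
  weakly_adequate X /\ (forall Y, weakly_adequate Y -> incl X Y -> incl Y X).

Definition confident_weakly_coherent (E : argset) : Prop :=
  weakly_coherent E /\
  exists X, confident X /\ (forall a, E a <-> Arg_w X a).

Definition strongly_saturated : Prop :=
  (forall s t, SentA s -> SentA t -> inc s t -> minarg s \in A /\ minarg t \in A) /\
  (forall u a, SentA u -> a \in A -> incn a u -> minarg u \in A).

Definition is_SBAF : Prop :=
  inhabited S /\
  (forall s t, inc s t -> inc t s) /\
  (forall t u, ~ incn (minarg t) u) /\
  (forall a, a \in A -> Prem a != fset0).

End SBAF.

(* Main.v *)
Require Import Defs.
From mathcomp Require Import all_boot.
From mathcomp Require Import finmap.
From Stdlib Require Import Classical ClassicalEpsilon.

Section Helpers.
Local Set Implicit Arguments.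

Lemma minarg_sent (S : choiceType) (s x : S) : Sent (minarg s) x -> x = s.
Proof.
rewrite /Sent /Prem /Conc /minarg /= => -[|] //.
by rewrite inE => /eqP.
Qed.

Lemma noattack_def (S : choiceType) inc n (A : {fset Arg S}) (P : argset S) a c :
  subA A P -> conflict_free inc n P -> defends inc n A P a -> P c ->
  attacks inc n c a -> False.
Proof.
move=> hs hcf hdef Pc hca.
have [d [Pd hdc]] := hdef c (hs c Pc) hca.
exact: (hcf d c Pd Pc hdc).
Qed.

Lemma admissible_add (S : choiceType) inc n (A : {fset Arg S}) (P : argset S) a :
  subA A P -> admissible inc n A P -> a \in A -> defends inc n A P a ->
  admissible inc n A (fun x => P x \/ x = a).
Proof.
move=> hs [hcf hd] aA hda; split.
- move=> x y [Px|->] [Py|->] hxy.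
  + exact: (hcf x y Px Py hxy).
  + exact (noattack_def hs hcf hda Px hxy).
  + have [c [Pc hc]] := hd y Py a aA hxy.
    exact: (noattack_def hs hcf hda Pc hc).
  + have [c [Pc hc]] := hda a aA hxy.
    exact: (noattack_def hs hcf hda Pc hc).
- move=> x hx b bA hb.
  have hd' : defends inc n A P x by case: hx => [/hd|->].
  have [c [Pc hc]] := hd' b bA hb.
  by exists c; split; [left|].
Qed.

Lemma admissible_union (S : choiceType) inc n (A : {fset Arg S}) (P J : argset S) :
  admissible inc n A P -> admissible inc n A J ->
  (forall p j, P p -> J j -> ~ attacks inc n p j /\ ~ attacks inc n j p) ->
  admissible inc n A (fun x => P x \/ J x).
Proof.
move=> [hcfP hdP] [hcfJ hdJ] hx; split.
- move=> x y [Px|Jx] [Py|Jy].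
  + exact: hcfP.
  + exact: (hx x y Px Jy).1.
  + exact: (hx y x Py Jx).2.
  + exact: hcfJ.
- move=> x [Px|Jx] b bA hb.
  + have [c [Pc hc]] := hdP x Px b bA hb. by exists c; split; [left|].
  + have [c [Pc hc]] := hdJ x Jx b bA hb. by exists c; split; [right|].
Qed.

Definition asb (P : Prop) : bool := if excluded_middle_informative P then true else false.
Lemma asbP (P : Prop) : asb P = true <-> P.
Proof. by rewrite /asb; case: excluded_middle_informative. Qed.

Lemma count_lt (T : eqType) (p q : pred T) (s : seq T) :
  (forall x, p x -> q x) -> (exists x, x \in s /\ q x /\ ~~ p x) ->
  count p s < count q s.
Proof.
move=> hpq; elim: s => [|y s IH] [x [xs [qx px]]] //=.
have hle : count p s <= count q s by apply: sub_count => z /hpq.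
move: xs; rewrite inE => /orP [/eqP<-|xs].
- by rewrite (negbTE px) qx add0n add1n ltnS.
- have := IH (ex_intro _ x (conj xs (conj qx px))).
  case hy: (p y); first by rewrite (hpq _ hy).
  by case: (q y) => /= h; rewrite ?add0n ?add1n //; apply: ltnW.
Qed.

Lemma exists_preferred (S : choiceType) inc n (A : {fset Arg S}) (F : argset S) :
  subA A F -> admissible inc n A F -> exists P, preferred inc n A P /\ incl F P.
Proof.
pose cnt (G : argset S) := count (fun a => ~~ asb (G a)) (enum_fset A).
suff: forall k G, cnt G <= k -> subA A G -> admissible inc n A G -> incl F G ->
   exists P, preferred inc n A P /\ incl F P.
  by move=> h hs ha; apply: (h (cnt F) F) => //.
elim=> [|k IH] G hc hs ha hf;
  (case: (classic (forall H, subA A H -> admissible inc n A H -> incl G H -> incl H G)) => hmax;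
   [by exists G; split => //; split => //; split|]);
  (have [H hH] := not_all_ex_not _ _ hmax);
  (have [hHs hH'] := imply_to_and _ _ hH; have [hHa hH''] := imply_to_and _ _ hH');
  (have [hGH hnot] := imply_to_and _ _ hH'');
  (have [a ha'] := not_all_ex_not _ _ hnot; have [Ha nGa] := imply_to_and _ _ ha');
  (have hlt : cnt H < cnt G by
    apply: count_lt;
    [ move=> x /negP hx; apply/negP => /asbP hGx; apply: hx; apply/asbP; exact: hGH
    | exists a; split; [exact: (hHs a Ha)|split];
      [ apply/negP => /asbP; exact: nGa | by rewrite negbK; apply/asbP ] ]).
- by move: (leq_trans hlt hc).
- apply: (IH H) => //; first by rewrite -ltnS (leq_trans hlt hc).
  by move=> x /hf /hGH.
Qed.

End Helpers.

Theorem mainTheorem18 (S : choiceType) (inc : S -> S -> Prop)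
  (n : Arg S -> option S) (A : {fset Arg S}) :
  is_SBAF inc n A ->
  strongly_saturated inc n A ->
  forall E : argset S, subA A E ->
  confident_weakly_coherent inc n A E ->
  preferred inc n A E.
Proof.
move=> [_ [hsym [hmin _]]] [sat1 sat2] E hE [[hadmE _] [X [[hwaX hmaxX] hEX]]].
split; first exact hE. split; first exact hadmE.
move=> F hF hadmF hEF.
have [P [[hPA [hadmP hmaxP]] hFP]] := exists_preferred hF hadmF.
have [hcfP hdP] := hadmP.
have [hXA [hXc _]] := hwaX.
suff hPE : incl P E by move=> x /hFP /hPE.
have minE : forall s, X s -> minarg s \in A -> E (minarg s).
  move=> s Xs hA; apply/hEX => G hG _; apply: hG.
  exists (fun x => x = minarg s); split; last split => //.
  - move=> x ->; split => //; split.
    + by move=> y /minarg_sent ->.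
    + by move=> t /hmin.
  - split.
    + move=> x y -> -> [[y' [/minarg_sent -> h]] | /hmin] //.
      exact: (hXc s s Xs Xs h).
    + move=> x -> b bA [[y' [/minarg_sent -> h]] | /hmin] //.
      exists (minarg s); split => //; left; exists (Conc b); split; first by right.
      exact: hsym.
have SentP : forall p, P p -> SentA A (Conc p).
  by move=> p Pp; exists p; split; [exact: hPA|right].
have SentPx : forall x, SentE P x -> SentA A x.
  by move=> x [p [Pp hx]]; exists p; split; [exact: hPA|].
have undercut : forall Z : sentset S, compatible inc Z -> incl Z (SentA A) ->
    incl (SentE P) Z -> forall p t, P p -> incn inc n p t -> Z t -> False.
  move=> Z hZc hZA hPZ p t Pp hpt Zt.
  have mA : minarg t \in A := sat2 t p (hZA t Zt) (hPA p Pp) hpt.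
  have [c [Pc hc]] := hdP p Pp (minarg t) mA (or_intror hpt).
  case: hc => [[x [/minarg_sent -> hi]] | /hmin] //.
  apply: (hZc (Conc c) t _ Zt hi); apply: hPZ; exists c; split => //; by right.
pose Y : sentset S := fun x => X x \/ SentE P x.
have mixed : forall u v, X u -> SentE P v -> inc v u -> False.
  move=> u v Xu [p [Pp Sv]] h.
  have mA : minarg u \in A := (sat1 v u (SentPx v (ex_intro _ p (conj Pp Sv))) (hXA u Xu) h).2.
  have Pm : P (minarg u) by apply/hFP/hEF/minE.
  apply: (hcfP (minarg u) p Pm Pp); left; exists v; split => //.
have hYc : compatible inc Y.
  move=> s t [Xs|Ps] [Xt|Pt] h.
  - exact: (hXc s t Xs Xt h).
  - exact: (mixed s t Xs Pt h).
  - exact: (mixed t s Xt Ps (hsym _ _ h)).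
  - case: Ps => [a [Pa Sa]]; case: Pt => [b [Pb Sb]].
    have mA : minarg s \in A :=
      (sat1 t s (SentPx t (ex_intro _ b (conj Pb Sb))) (SentPx s (ex_intro _ a (conj Pa Sa))) h).2.
    have [c [Pc hc]] := hdP b Pb (minarg s) mA (or_introl (ex_intro _ t (conj Sb h))).
    case: hc => [[x [/minarg_sent -> hi]] | /hmin] //.
    apply: (hcfP c a Pc Pa); left; exists s; split => //.
have hYA : incl Y (SentA A) by move=> x [/hXA|/SentPx].
have hPY : incl (SentE P) Y by move=> x hx; right.
have undY := undercut Y hYc hYA hPY.
have hwaY : weakly_adequate inc n A Y.
  split => //; split => //.
  move=> a ha s hs.
  have Pa : P a.
    apply: ha.
    - move=> j [J [hJ [hadmJ Jj]]].
      pose U := fun x => P x \/ J x.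
      have hU : admissible inc n A U.
        apply: admissible_union => // p q Pp Jq; split.
        + move=> [[s' [hs' hi]] | hu].
          * apply: (hYc (Conc p) s' _ ((hJ q Jq).2.1 s' hs') hi).
            by right; exists p; split => //; right.
          * apply: ((hJ q Jq).2.2 (Conc p) hu).
            by right; exists p; split => //; right.
        + move=> [[s' [hs' hi]] | hu].
          * apply: (hYc (Conc q) s' ((hJ q Jq).2.1 (Conc q) (or_intror erefl)) _ hi).
            by right; exists p; split.
          * exact: (undY p (Conc q) Pp hu ((hJ q Jq).2.1 (Conc q) (or_intror erefl))).
      have hUA : subA A U by move=> x [/hPA|/hJ []].
      exact: (hmaxP U hUA hU (fun x hx => or_introl hx) j (or_intror Jj)).
    - move=> b; split.
      + move=> [[bA _] hdb].
        have hb := admissible_add hPA hadmP bA hdb.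
        have hbA : subA A (fun x => P x \/ x = b) by move=> x [/hPA|->].
        exact: (hmaxP _ hbA hb (fun x hx => or_introl hx) b (or_intror erefl)).
      + move=> Pb; split; last exact: hdP.
        split; first exact: hPA.
        split; first by move=> s' hs'; right; exists b; split => //; left.
        by move=> t ht Yt; exact: (undY b t Pb ht Yt).
  by right; exists a.
have hYX : incl Y X := hmaxX Y hwaY (fun x hx => or_introl hx).
move=> p Pp; apply/hEX => G hG _; apply: hG.
exists P; split; last by split.
move=> q Pq; split; first exact: hPA.
split; first by move=> s hs; apply: hYX; right; exists q.
move=> t ht Xt.
apply: (undercut X hXc hXA _ q t Pq ht Xt).
by move=> x hx; apply: hYX; right.
Qed.
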